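(* Let $\gamma=(\gamma_1,\dots,\gamma_b)$ be a parallel map on $V=V_1\oplus\cdots\oplus V_b$, $V_i\cong(\mathbb F_2)^m$, with $0\gamma=0$. Suppose every $\gamma_i$ is differentially $2^r$-uniform with $r<m-1$ and strongly $r$-anti-invariant. If $\gamma$ maps $\mathcal L(W)$ onto a non-trivial partition $\mathcal{LA}_U(W_1|W_2)$, then $W$, $W_1$, $W_2$ are walls and $W=W_1=W_2$; in particular $\mathcal{LA}_U(W_1|W_2)$ is linear.
   Context: Let $m,b>1$, $n=mb$, $V=(\mathbb F_2)^n=V_1\oplus\cdots\oplus V_b$, $V_i\cong(\mathbb F_2)^m$. Permutations act on the right. A parallel map is $\gamma\in\mathrm{Sym}(V)$ with $(v_1\oplus\cdots\oplus v_b)\gamma=v_1\gamma_1\oplus\cdots\oplus v_b\gamma_b$, $\gamma_i\in\mathrm{Sym}(V_i)$ (S-boxes). A wall is $\bigoplus_{i\in I}V_i$ with $\emptyset\ne I\subsetneq\{1,\dots,b\}$. For $f:(\mathbb F_2)^m\to(\mathbb F_2)^m$, $f$ is differentially $\delta$-uniform if $\delta=\max_{a\ne0,b}|\{x:f(x+a)+f(x)=b\}|$; with $f(0)=0$ and $1\le r<m$, $f$ is strongly $r$-anti-invariant if for all subspaces $U,W$ with $f(U)=W$, either $\dim U=\dim W<m-r$ or $U=W=(\mathbb F_2)^m$. A permutation maps a partition $\mathcal A$ onto $\mathcal B$ if it sends the blocks of $\mathcal A$ exactly onto the blocks of $\mathcal B$; a partition is trivial if it is the partition into singletons or $\{V\}$.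 $\mathcal L(W)=\{W+v:v\in V\}$ for a subspace $W$ (linear partition). For a subspace $U$ of dimension $n-1$ and subspaces $W_1,W_2\subseteq U$, $\mathcal{LA}_U(W_1|W_2)=\{W_1+v:v\in U\}\cup\{(W_2+\bar v)+v:v\in U\}$ for any $\bar v\in V\setminus U$. *)

(* Defs.v *)
From HB Require Import structures.
From mathcomp Require Import all_boot all_order all_algebra.
From mathcomp Require Import perm.
Set Implicit Arguments. Unset Strict Implicit. Unset Printing Implicit Defensive.
Import GRing.Theory.
Local Open Scope ring_scope.

(* An S-box space (F_2)^m is 'rV['F_2]_m; the whole space
   V = V_1 (+) ... (+) V_b is 'M['F_2]_(b, m), row i being the component in V_i. *)
Notation sbox m := 'rV['F_2]_m.
Notation space b m := 'M['F_2]_(b, m).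

Section Defs.
Variables (b m : nat).

Definition parallel (g : 'I_b -> {perm sbox m}) (v : space b m) : space b m :=
  \matrix_i (g i (row i v)).

Definition svset (W : {vspace space b m}) : {set space b m} :=
  [set x | x \in W].

Definition coset (W : {vspace space b m}) (v : space b m) : {set space b m} :=
  [set x + v | x in svset W].

Definition linpart (W : {vspace space b m}) : {set {set space b m}} :=
  [set coset W v | v : space b m].

(* LA_U(W1|W2), with vbar a given vector outside U *)
Definition LApart (U W1 W2 : {vspace space b m}) (vbar : space b m)
  : {set {set space b m}} :=
  [set coset W1 v | v in svset U] :|: [set coset W2 (vbar + v) | v in svset U].

(* wall: direct sum of the V_i for i in I, I nonempty and proper *)
Definition wall (W : {vspace space b m}) : Prop :=
  exists I : {set 'I_b}, [/\ I != set0, I != setT &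
    forall v : space b m, (v \in W) = [forall i, (i \notin I) ==> (row i v == 0)]].

Definition trivial_partition (P : {set {set space b m}}) : Prop :=
  P = [set [set x] | x : space b m] \/ P = [set setT].

Definition maps_onto (f : space b m -> space b m) (P Q : {set {set space b m}}) : Prop :=
  [set f @: (B : {set space b m}) | B in P] = Q.
End Defs.

Section Sbox.
Variable m : nat.

Definition diff_count (f : sbox m -> sbox m) (a c : sbox m) : nat :=
  #|[set x : sbox m | f (x + a) + f x == c]|.

Definition diff_uniform (f : sbox m -> sbox m) (delta : nat) : Prop :=
  delta = (\max_(a : sbox m | a != 0%R) \max_(c : sbox m) diff_count f a c)%N.

Definition rvset (W : {vspace sbox m}) : {set sbox m} := [set x | x \in W].

Definition strongly_anti_invariant (f : sbox m -> sbox m) (r : nat) : Prop :=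
  [/\ f 0 = 0, (1 <= r)%N, (r < m)%N &
    forall U W : {vspace sbox m}, f @: rvset U = rvset W ->
      (\dim U = \dim W /\ (\dim W < m - r)%N) \/ (U = fullv /\ W = fullv)].
End Sbox.

(* Main.v *)
Require Import Defs.
From HB Require Import structures.
From mathcomp Require Import all_boot all_order all_algebra.
From mathcomp Require Import perm finfield zify.
Set Implicit Arguments. Unset Strict Implicit. Unset Printing Implicit Defensive.
Import GRing.Theory.
Local Open Scope ring_scope.

Definition emb b m (i : 'I_b) (y : 'rV['F_2]_m) : 'M['F_2]_(b, m) :=
  delta_mx i (0 : 'I_1) *m y.

Lemma row_emb b m (i j : 'I_b) (y : 'rV['F_2]_m) :
  row j (emb i y) = if j == i then y else 0.
Proof.
apply/rowP => k; rewrite !mxE big_ord1 !mxE eqxx andbT.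
by case: eqP => _; rewrite ?mul1r ?mul0r // mxE.
Qed.

Lemma row_par b m (g : 'I_b -> {perm sbox m}) v i :
  row i (parallel g v) = g i (row i v).
Proof. by rewrite rowK. Qed.

Lemma F2_addxx p q (x : 'M['F_2]_(p, q)) : x + x = 0.
Proof.
apply/matrixP => i j; rewrite !mxE; exact: (addrr_pchar2 (pchar_Fp (isT : prime 2))).
Qed.

Lemma F2_opp p q (x : 'M['F_2]_(p, q)) : - x = x.
Proof. by rewrite -[LHS]add0r -(F2_addxx x) addrK. Qed.

Lemma F2_sub p q (x y : 'M['F_2]_(p, q)) : x - y = x + y.
Proof. by rewrite F2_opp. Qed.

Lemma card_F2 : #|'F_2| = 2%N.
Proof. exact: card_Fp. Qed.

Lemma mem_coset b m (W : {vspace 'M['F_2]_(b, m)}) u y :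
  (y \in coset W u) = (y - u \in W).
Proof.
apply/imsetP/idP => [[x] | yW]; first by rewrite inE => xW ->; rewrite addrK.
by exists (y - u); rewrite ?inE // subrK.
Qed.

Definition pinv b m (g : 'I_b -> {perm sbox m}) := parallel (fun i => (g i)^-1%g).

Lemma parK b m (g : 'I_b -> {perm sbox m}) : cancel (parallel g) (pinv g).
Proof. by move=> v; apply/row_matrixP => i; rewrite !row_par permK. Qed.

Lemma parKV b m (g : 'I_b -> {perm sbox m}) : cancel (pinv g) (parallel g).
Proof. by move=> v; apply/row_matrixP => i; rewrite !row_par permKV. Qed.

Lemma par_emb b m (g : 'I_b -> {perm sbox m}) i x :
  (forall j, g j 0 = 0) -> parallel g (emb i x) = emb i (g i x).
Proof.
move=> g0; apply/row_matrixP => j; rewrite row_par !row_emb.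
by case: eqP => // ->.
Qed.

Lemma emb0 b m (i : 'I_b) : emb i (0 : 'rV['F_2]_m) = 0.
Proof. by rewrite /emb mulmx0. Qed.

Lemma embD b m (i : 'I_b) (x y : 'rV['F_2]_m) : emb i (x + y) = emb i x + emb i y.
Proof. by rewrite /emb mulmxDr. Qed.

Lemma embB b m (i : 'I_b) (x y : 'rV['F_2]_m) : emb i (x - y) = emb i x - emb i y.
Proof. by rewrite /emb mulmxBr. Qed.

Lemma mem_coset_self b m (W : {vspace 'M['F_2]_(b, m)}) v : v \in coset W v.
Proof. by rewrite mem_coset subrr mem0v. Qed.

Lemma block b m (g : 'I_b -> {perm sbox m}) (W U W1 W2 : {vspace 'M['F_2]_(b, m)}) vbar :
  (W2 <= U)%VS -> vbar \notin U ->
  maps_onto (parallel g) (linpart W) (LApart U W1 W2 vbar) ->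
  forall v, parallel g v \in U ->
  exists2 u, u \in U & parallel g @: coset W v = coset W1 u.
Proof.
move=> W2U vbarU H v gvU.
have: parallel g @: coset W v \in LApart U W1 W2 vbar.
  rewrite -H; apply/imsetP; exists (coset W v) => //.
  by apply/imsetP; exists v.
rewrite /LApart inE => /orP [] /imsetP [u]; rewrite inE => uU E.
  by exists u.
have: parallel g v \in coset W2 (vbar + u).
  by rewrite -E; apply: imset_f; apply: mem_coset_self.
rewrite mem_coset => /(subvP W2U) h.
case/negP: vbarU.
have -> : vbar = (parallel g v - u) - (parallel g v - (vbar + u)).
  by rewrite opprB addrC addrA subrK addrK.
by rewrite memvB // memvB.
Qed.

Lemma block_diff b m (g : 'I_b -> {perm sbox m}) (W U W1 W2 : {vspace 'M['F_2]_(b, m)}) vbar :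
  (W2 <= U)%VS -> vbar \notin U ->
  maps_onto (parallel g) (linpart W) (LApart U W1 W2 vbar) ->
  forall v w, parallel g v \in U -> w \in W ->
  parallel g (v + w) - parallel g v \in W1.
Proof.
move=> W2U vbarU H v w gvU wW.
have [u uU E] := block W2U vbarU H gvU.
have h1 : parallel g v \in coset W1 u by rewrite -E imset_f // mem_coset_self.
have h2 : parallel g (v + w) \in coset W1 u.
  by rewrite -E imset_f // mem_coset addrAC subrr add0r.
rewrite mem_coset in h1; rewrite mem_coset in h2.
have -> : parallel g (v + w) - parallel g v
   = (parallel g (v + w) - u) - (parallel g v - u).
  by rewrite opprB addrA subrK.
by rewrite memvB.
Qed.

Lemma block_img b m (g : 'I_b -> {perm sbox m}) (W U W1 W2 : {vspace 'M['F_2]_(b, m)}) vbar :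
  (W2 <= U)%VS -> vbar \notin U -> parallel g 0 = 0 ->
  maps_onto (parallel g) (linpart W) (LApart U W1 W2 vbar) ->
  forall y, y \in W1 -> exists2 z, z \in W & parallel g z = y.
Proof.
move=> W2U vbarU g0 H y yW1.
have gU : parallel g 0 \in U by rewrite g0 mem0v.
have [u uU E] := block W2U vbarU H gU.
have h0 : parallel g 0 \in coset W1 u by rewrite -E imset_f // mem_coset_self.
rewrite g0 mem_coset sub0r in h0.
have : y \in coset W1 u.
  by rewrite mem_coset -[u]opprK memvB // memvN.
rewrite -E => /imsetP [z]; rewrite mem_coset subr0 => zW ->.
by exists z.
Qed.

Lemma diff_bound m (f : {perm sbox m}) r a c :
  diff_uniform f (2 ^ r) -> a != 0 -> (diff_count f a c <= 2 ^ r)%N.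
Proof.
move=> -> a0; apply: (bigmax_sup a) => //.
exact: (leq_bigmax c).
Qed.

Lemma card_rv m (X : {vspace 'rV['F_2]_m}) : #|[set x | x \in X]| = (2 ^ \dim X)%N.
Proof. by rewrite cardsE card_vspace card_F2. Qed.

Definition embL b m (i : 'I_b) : 'Hom('rV['F_2]_m, 'M['F_2]_(b, m)) :=
  linfun (mulmx (delta_mx i (0 : 'I_1))).
Arguments embL {b m} i.

Definition Pre b m (i : 'I_b) (U : {vspace 'M['F_2]_(b, m)}) : {vspace 'rV['F_2]_m} :=
  (embL i @^-1: U)%VS.

Lemma mem_Pre b m (i : 'I_b) (U : {vspace 'M['F_2]_(b, m)}) x :
  (x \in Pre i U) = (emb i x \in U).
Proof. by rewrite -memv_preim /embL lfunE. Qed.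

Lemma emb_inj b m (i : 'I_b) : injective (@emb b m i).
Proof.
move=> x y E; have := congr1 (row i) E; by rewrite !row_emb eqxx.
Qed.

Lemma lker_embL b m (i : 'I_b) : lker (@embL b m i) = 0%VS.
Proof.
apply/eqP; rewrite -subv0; apply/subvP => x; rewrite memv_ker /embL lfunE /= => /eqP.
rewrite -/(emb i x) -(emb0 m i) => /emb_inj ->; exact: mem0v.
Qed.

Lemma dim_Pre b m (i : 'I_b) (U : {vspace 'M['F_2]_(b, m)}) :
  \dim U = (m * b).-1 -> (m.-1 <= \dim (Pre i U))%N.
Proof.
move=> dU.
have k0 := @lker_embL b m i.
have e1 : \dim (Pre i U) = \dim (U :&: limg (embL i)).
  rewrite /Pre -lpreim_cap_limg -(limg_dim_eq (f := embL i)); last by rewrite k0 capv0.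
  by rewrite lpreimK // capvSr.
have e2 : \dim (limg (@embL b m i)) = m.
  rewrite limg_dim_eq; last by rewrite k0 capv0.
  by rewrite dimvf /dim /= mul1n.
have e3 : (\dim (U + limg (embL i)) <= m * b)%N.
  by rewrite mulnC; have := dimvS (subvf (U + limg (embL i))); rewrite dimvf /dim /=.
move: e3 (dimv_sum_cap U (limg (embL i))).
rewrite e1 e2 dU; set s := \dim (U + _); set t := \dim (_ :&: _).
move: s t => s t; set k := (m * b)%N; nia.
Qed.

Lemma rowD' p q (j : 'I_p) (A B : 'M['F_2]_(p, q)) : row j (A + B) = row j A + row j B.
Proof. by apply/rowP => k; rewrite !mxE. Qed.
Lemma rowB' p q (j : 'I_p) (A B : 'M['F_2]_(p, q)) : row j (A - B) = row j A - row j B.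
Proof. by apply/rowP => k; rewrite !mxE. Qed.

Lemma emb_pre b m (g : 'I_b -> {perm sbox m}) (i : 'I_b) z c :
  (forall j, g j 0 = 0) -> parallel g z = emb i c ->
  z = emb i (row i z) /\ g i (row i z) = c.
Proof.
move=> g0 E; split; last by have := congr1 (row i) E; rewrite row_par row_emb eqxx.
apply/row_matrixP => j; rewrite row_emb; case: eqP => [-> //|/eqP ji].
have := congr1 (row j) E; rewrite row_par row_emb (negbTE ji) => E'.
by apply: (@perm_inj _ (g j)); rewrite E' g0.
Qed.

Lemma coord_full b m r (g : 'I_b -> {perm sbox m})
  (W U W1 W2 : {vspace 'M['F_2]_(b, m)}) vbar :
  (forall j, g j 0 = 0) ->
  (r < m.-1)%N ->
  (forall i, diff_uniform (g i) (2 ^ r)) ->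
  (forall i, strongly_anti_invariant (g i) r) ->
  \dim U = (m * b).-1 -> (W2 <= U)%VS -> vbar \notin U ->
  maps_onto (parallel g) (linpart W) (LApart U W1 W2 vbar) ->
  forall i w, w \in W -> row i w != 0 -> forall y, emb i y \in W.
Proof.
move=> g0 hr du sai dU W2U vbarU H i w wW wi.
have gp0 : parallel g 0 = 0.
  by apply/row_matrixP => j; rewrite row_par !row0 g0.
have BD := block_diff W2U vbarU H.
have BI := block_img W2U vbarU gp0 H.
set S0 := [set x : sbox m | emb i (g i x) \in U].
have cS0 : (2 ^ m.-1 <= #|S0|)%N.
  have -> : #|S0| = #|[set y | y \in Pre i U]|.
    rewrite -(card_imset _ (@perm_inj _ (g i))); apply: eq_card => y.
    rewrite inE mem_Pre; apply/imsetP/idP => [[x]|h].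
      by rewrite inE => h ->.
    by exists ((g i)^-1%g y); rewrite ?inE ?permKV.
  by rewrite card_rv leq_exp2l // dim_Pre.
have hS0 : forall x, x \in S0 -> parallel g (emb i x) \in U.
  by move=> x; rewrite inE par_emb.
have pr : (2 ^ r < 2 ^ m.-1)%N by rewrite ltn_exp2l.
have [y y0 yW1] : exists2 y, y != 0 & emb i y \in W1.
  set a := row i w.
  pose D x := g i (x + a) + g i x.
  have [x xS dx] : exists2 x, x \in S0 & D x != D 0.
    case: (pickP [pred x | (x \in S0) && (D x != D 0)]) => [x /andP[xS dx] | none].
      by exists x.
    exfalso.
    have : (#|S0| <= diff_count (g i) a (D 0%R))%N.
      apply: subset_leq_card; apply/subsetP => x xS; rewrite inE.
      by have := none x; rewrite /= xS /= => /negbFE.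
    move=> h1; have h2 := leq_trans h1 (diff_bound (D 0%R) (du i) wi).
    by have := leq_trans pr (leq_trans cS0 h2); rewrite ltnn.
  exists (D x - D 0); first by rewrite subr_eq0.
  have h1 := BD _ _ (hS0 _ xS) wW.
  have g0U : parallel g 0 \in U by rewrite gp0 mem0v.
  have h2 := BD 0 _ g0U wW.
  have -> : emb i (D x - D 0) = (parallel g (emb i x + w) - parallel g (emb i x))
       - (parallel g (0 + w) - parallel g 0).
    apply/row_matrixP => j.
    rewrite !rowB' !row_par !rowD' !row0 !row_emb.
    case: eqP => [->|_]; last by rewrite subrr.
    by rewrite /D /a g0 !add0r !addr0 !F2_sub addr0.
  by rewrite memvB.
have [z zW gz] := BI _ yW1.
have [ze gze] := emb_pre g0 gz.
set x0 := row i z in ze gze.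
have x0W : emb i x0 \in W by rewrite -ze.
have x00 : x0 != 0.
  by apply: contraNneq y0 => e; rewrite -gze e g0.
set Yset := [set c | c \in Pre i W1].
have hD2 : forall z, z \in S0 -> g i (z + x0) + g i z \in Yset :\ 0.
  move=> z' zS; rewrite !inE mem_Pre; apply/andP; split.
    rewrite -F2_sub subr_eq0; apply: contra x00 => /eqP /perm_inj.
    by move/(congr1 (fun t => t - z')); rewrite addrAC subrr add0r => ->.
  have := BD _ _ (hS0 _ zS) x0W.
  by rewrite -embD !par_emb // -embB F2_sub.
have cnt : (#|S0| <= #|Yset :\ 0%R| * 2 ^ r)%N.
  rewrite -sum1_card (partition_big (fun z => g i (z + x0) + g i z) (mem (Yset :\ 0))) //=.
  rewrite -sum_nat_const; apply: leq_sum => c _.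
  rewrite sum1dep_card; apply: leq_trans (diff_bound c (du i) x00).
  apply: subset_leq_card; apply/subsetP => t; rewrite !inE => /andP [_ ->] //.
have cY : #|Yset :\ 0| = (2 ^ \dim (Pre i W1)).-1.
  by rewrite -card_rv (cardsD1 0 Yset) inE mem0v.
set d := \dim (Pre i W1) in cY.
have dge : (m - r <= d)%N.
  rewrite leqNgt; apply/negP => dlt.
  have : (2 ^ d * 2 ^ r <= 2 ^ m.-1)%N by rewrite -expnD leq_exp2l //; lia.
  move: cnt; rewrite cY.
  have : (0 < 2 ^ d)%N by rewrite expn_gt0.
  have : (0 < 2 ^ r)%N by rewrite expn_gt0.
  move: (2 ^ d)%N (2 ^ r)%N (2 ^ m.-1)%N cS0 => X R M; nia.
have [_ _ _ sa] := sai i.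
have : (g i) @: rvset (Pre i W) = rvset (Pre i W1).
  apply/setP => c; rewrite !inE mem_Pre; apply/imsetP/idP => [[x]|h].
    rewrite inE mem_Pre => xW ->.
    have g0U : parallel g 0 \in U by rewrite gp0 mem0v.
    have := BD 0 _ g0U xW.
    by rewrite add0r gp0 subr0 par_emb.
  have [z' z'W gz'] := BI _ h.
  have [ze' gze'] := emb_pre g0 gz'.
  by exists (row i z'); rewrite // inE mem_Pre -ze'.
move/sa => [[_ dlt] | [Xf _]]; first by move: dlt; rewrite -/d; lia.
move=> y'; by rewrite -mem_Pre Xf memvf.
Qed.

Lemma embE b m (i j : 'I_b) (y : 'rV['F_2]_m) k :
  emb i y j k = if j == i then y ord0 k else 0.
Proof.
have := congr1 (fun M : 'rV['F_2]_m => M ord0 k) (row_emb i j y); rewrite mxE => ->.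
by case: eqP => //; rewrite mxE.
Qed.

Lemma sum_emb b m (v : 'M['F_2]_(b, m)) : v = \sum_i emb i (row i v).
Proof.
apply/matrixP => j k; rewrite summxE (bigD1 j) //= big1 ?addr0.
  by rewrite embE eqxx mxE.
by move=> l lj; rewrite embE eq_sym (negbTE lj).
Qed.

Unset Implicit Arguments.

Theorem lemma3p8 (m b r : nat) (g : 'I_b -> {perm sbox m})
  (W U W1 W2 : {vspace 'M['F_2]_(b, m)}) (vbar : 'M['F_2]_(b, m)) :
  (1 < m)%N -> (1 < b)%N ->
  parallel g 0 = 0 ->
  (r < m.-1)%N ->
  (forall i, diff_uniform (g i) (2 ^ r)) ->
  (forall i, strongly_anti_invariant (g i) r) ->
  \dim U = (m * b).-1 -> (W1 <= U)%VS -> (W2 <= U)%VS -> vbar \notin U ->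
  ~ trivial_partition (LApart U W1 W2 vbar) ->
  maps_onto (parallel g) (linpart W) (LApart U W1 W2 vbar) ->
  [/\ wall W, wall W1, wall W2, W = W1 & W1 = W2]
  /\ LApart U W1 W2 vbar = linpart W1.
Proof.
move=> m1 b1 gp0 hr du sai dU W1U W2U vbarU ntriv H.
have g0 : forall j, g j 0 = 0 by move=> j; case: (sai j).
have gi0 : forall j, (g j)^-1%g 0 = 0 by move=> j; rewrite -{1}(g0 j) permK.
have CF := coord_full g0 hr du sai dU W2U vbarU H.
have BD := block_diff W2U vbarU H.
have BI := block_img W2U vbarU gp0 H.
have g0U : parallel g 0 \in U by rewrite gp0 mem0v.
set I := [set i | [exists w, (w \in W) && (row i w != 0)]].
have WC : forall v, (v \in W) = [forall i, (i \notin I) ==> (row i v == 0)].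
  move=> v; apply/idP/idP => [vW | /forallP hv].
    apply/forallP => i; apply/implyP; rewrite inE negb_exists => /forallP /(_ v).
    by rewrite vW /= negbK.
  rewrite [v]sum_emb; apply: memv_suml => i _.
  case: (boolP (i \in I)) => [|iI].
    by rewrite inE => /existsP [w /andP [wW wi]]; apply: CF wW wi _.
  by move/implyP: (hv i) => /(_ iI) /eqP ->; rewrite emb0 mem0v.
have gW : forall z, z \in W -> parallel g z \in W.
  move=> z; rewrite !WC => /forallP hz; apply/forallP => i; apply/implyP => iI.
  by move/implyP: (hz i) => /(_ iI) /eqP; rewrite row_par => ->; rewrite g0.
have giW : forall z, z \in W -> pinv g z \in W.
  move=> z; rewrite !WC => /forallP hz; apply/forallP => i; apply/implyP => iI.
  by move/implyP: (hz i) => /(_ iI) /eqP; rewrite row_par => ->; rewrite gi0.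
have I0 : I != set0.
  apply/negP => /eqP I0; apply: ntriv; left.
  have Wz : forall v, v \in W -> v = 0.
    move=> v; rewrite WC => /forallP hv; apply/row_matrixP => i.
    by move/implyP: (hv i); rewrite I0 inE row0 => /(_ isT) /eqP.
  have cz : forall v, coset W v = [set v].
    move=> v; apply/setP => x; rewrite mem_coset inE; apply/idP/eqP => [/Wz/eqP|->].
      by rewrite subr_eq0 => /eqP.
    by rewrite subrr mem0v.
  rewrite -H; apply/setP => S; apply/imsetP/imsetP => [[B /imsetP [v _ ->] ->] | [x _ ->]].
    by exists (parallel g v) => //; rewrite cz imset_set1.
  exists [set pinv g x]; first by apply/imsetP; exists (pinv g x); rewrite ?cz.
  by rewrite imset_set1 parKV.
have IT : I != setT.
  apply/negP => /eqP IT.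
  have zW : pinv g vbar \in W.
    by rewrite WC; apply/forallP => i; rewrite IT inE.
  have := BD 0 _ g0U zW; rewrite add0r gp0 subr0 parKV => /(subvP W1U).
  by rewrite (negbTE vbarU).
have wallW : wall W by exists I.
have WW1 : W = W1.
  apply/vspaceP => v; apply/idP/idP => [vW | vW1].
    have := BD 0 _ g0U (giW _ vW); by rewrite add0r gp0 subr0 parKV.
  by have [z zW <-] := BI _ vW1; apply: gW.
have cg : forall v, parallel g @: coset W v = coset W (parallel g v).
  move=> v; apply/setP => y; rewrite mem_coset; apply/imsetP/idP => [[z] | h].
    rewrite mem_coset !WC => /forallP hz ->; apply/forallP => i; apply/implyP => iI.
    move/implyP: (hz i) => /(_ iI); rewrite !rowB' !row_par !subr_eq0 => /eqP ->.
    by [].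
  exists (pinv g y); last by rewrite parKV.
  move: h; rewrite mem_coset !WC => /forallP hz; apply/forallP => i; apply/implyP => iI.
  move/implyP: (hz i) => /(_ iI); rewrite !rowB' !row_par !subr_eq0 => /eqP ->.
  by rewrite permK.
have LAW : LApart U W1 W2 vbar = linpart W.
  rewrite -H; apply/setP => S; apply/imsetP/imsetP => [[B /imsetP [v _ ->] ->] | [v _ ->]].
    by exists (parallel g v); rewrite ?cg.
  exists (coset W (pinv g v)); first by apply/imsetP; exists (pinv g v).
  by rewrite cg parKV.
have WW2 : W2 = W.
  have : coset W2 (vbar + 0) \in LApart U W1 W2 vbar.
    by rewrite inE; apply/orP; right; apply/imsetP; exists 0; rewrite ?inE ?mem0v.
  rewrite LAW => /imsetP [v' _ E].
  have hv : vbar - v' \in W by rewrite -mem_coset -E mem_coset addr0 subrr mem0v.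
  apply/vspaceP => x.
  have : (x + vbar \in coset W2 (vbar + 0)) = (x \in W2).
    by rewrite mem_coset addr0 addrK.
  rewrite E mem_coset -addrA => <-.
  by rewrite rpredDr.
split; last by rewrite LAW WW1.
by rewrite -WW1 WW2.
Qed.
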